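(* Let $d$ be a premetric on a topological space $X$, and put $p=\overline d$ and $\rho=\overline d^\circ$. Then for every non-empty $A\subset X$ we have $\overline p_A=\overline d_A$ and $\overline\rho^\circ_A=\overline d^\circ_A$.
   Context: A premetric on $X$ is $d:X\times X\to[0,\infty)$ with $d(x,x)=0$. $B_d(x,\varepsilon)=\{y:d(x,y)<\varepsilon\}$, $B_d(A,\varepsilon)=\bigcup_{a\in A}B_d(a,\varepsilon)$. For non-empty $A$: $\overline d_A(x)=\inf\{\varepsilon>0:x\in\overline{B_d(A,\varepsilon)}\}$ and $\overline d^\circ_A(x)=\inf\{\varepsilon>0:x\in B_d(A,\varepsilon)\cup\mathrm{int}\,\overline{B_d(A,\varepsilon)}\}$ (same definitions for any premetric in place of $d$). The regularization is $\overline d(x,y)=\overline d_{\{x\}}(y)$, the semiregularization $\overline d^\circ(x,y)=\overline d^\circ_{\{x\}}(y)$. *)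

(* Defs.v *)
From HB Require Import structures.
From mathcomp Require Import all_boot all_order all_algebra.
From mathcomp Require Import all_classical all_reals all_analysis.
Set Implicit Arguments. Unset Strict Implicit. Unset Printing Implicit Defensive.
Import Order.TTheory GRing.Theory Num.Theory.
Local Open Scope classical_set_scope.
Local Open Scope ring_scope.

(* Generalized premetrics are allowed to take the value +oo, since the
   regularization (an infimum over a possibly empty set) may be +oo. *)
Section PremetricDefs.
Context {R : realType} {X : topologicalType}.

Definition pball (d : X -> X -> \bar R) (x : X) (e : R) : set X :=
  [set y | (d x y < e%:E)%E].

Definition pballA (d : X -> X -> \bar R) (A : set X) (e : R) : set X :=
  \bigcup_(a in A) pball d a e.

Definition dbarA (d : X -> X -> \bar R) (A : set X) (x : X) : \bar R :=
  ereal_inf [set e%:E | e in [set e : R | 0 < e /\ closure (pballA d A e) x]].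

Definition dbarcA (d : X -> X -> \bar R) (A : set X) (x : X) : \bar R :=
  ereal_inf [set e%:E | e in [set e : R | 0 < e /\
     (pballA d A e `|` interior (closure (pballA d A e))) x]].

Definition regul (d : X -> X -> \bar R) (x y : X) : \bar R := dbarA d [set x] y.
Definition semiregul (d : X -> X -> \bar R) (x y : X) : \bar R := dbarcA d [set x] y.

End PremetricDefs.

(* Main.v *)
Require Import Defs.
From HB Require Import structures.
From mathcomp Require Import all_boot all_order all_algebra.
From mathcomp Require Import all_classical all_reals all_analysis.
From mathcomp Require Import lra.
Import Order.TTheory GRing.Theory Num.Theory.
Local Open Scope classical_set_scope.
Local Open Scope ring_scope.

Section H.
Context {R : realType} {X : topologicalType}.

Lemma clcl (B : set X) : closure (closure B) = closure B.
Proof. by rewrite -(proj1 (closure_id _)) //; exact: closed_closure. Qed.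

Lemma dbarA_eq (d1 d2 : X -> X -> \bar R) (A : set X) :
  (forall e, 0 < e -> pballA d2 A e `<=` pballA d1 A e) ->
  (forall e, 0 < e -> pballA d1 A e `<=` closure (pballA d2 A e)) ->
  dbarA d1 A = dbarA d2 A.
Proof.
move=> h1 h2; apply: funext => x; rewrite /dbarA; congr ereal_inf.
congr image; apply: funext => e /=; apply: propext; split => -[e0 hx]; split => //.
  by rewrite -clcl; apply: (closureS (h2 e e0)).
by apply: (closureS (h1 e e0)).
Qed.

Lemma dbarcA_eq (d1 d2 : X -> X -> \bar R) (A : set X) :
  (forall e, 0 < e -> pballA d2 A e `<=` pballA d1 A e) ->
  (forall e, 0 < e -> pballA d1 A e `<=`
      pballA d2 A e `|` interior (closure (pballA d2 A e))) ->
  dbarcA d1 A = dbarcA d2 A.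
Proof.
move=> h1 h2; apply: funext => x; rewrite /dbarcA; congr ereal_inf.
congr image; apply: funext => e /=; apply: propext.
split => -[e0 hx]; split => //.
- have hc : closure (pballA d1 A e) = closure (pballA d2 A e).
    apply/seteqP; split; last exact: closureS (h1 e e0).
    rewrite -[X in _ `<=` X]clcl; apply: closureS => z /(h2 e e0) [//|].
      by move=> ?; apply: subset_closure.
    by move/interior_subset.
  case: hx => [/(h2 e e0)//|]; rewrite hc; by right.
- have hc : closure (pballA d1 A e) = closure (pballA d2 A e).
    apply/seteqP; split; last exact: closureS (h1 e e0).
    rewrite -[X in _ `<=` X]clcl; apply: closureS => z /(h2 e e0) [//|].
      by move=> ?; apply: subset_closure.
    by move/interior_subset.
  case: hx => [/(h1 e e0) ?|]; first by left.
  by rewrite -hc; right.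
Qed.

End H.

Theorem proposition1p5 (R : realType) (X : topologicalType) (d : X -> X -> R)
  (d_ge0 : forall x y, 0 <= d x y) (d_refl : forall x, d x x = 0)
  (A : set X) (A_ne : A !=set0) :
  let dE := fun x y => (d x y)%:E in
  dbarA (regul dE) A = dbarA dE A /\
  dbarcA (semiregul dE) A = dbarcA dE A.
Proof.
move=> dE.
have mono : forall a e' e, A a -> e' < e ->
    pballA dE [set a] e' `<=` pballA dE A e.
  move=> a e' e Aa lt z [a' -> /= hz]; exists a => //.
  by rewrite /pball /= lte_fin (lt_trans _ lt) // -lte_fin.
have mid : forall a y e, (d a y < e) ->
    0 < (d a y + e) / 2 /\ d a y < (d a y + e) / 2 /\ (d a y + e) / 2 < e.
  move=> a y e h; have h0 := d_ge0 a y; split; [|split]; lra.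
split.
- apply: dbarA_eq => e e0.
  + move=> z [a Aa hz]; exists a => //; move: hz; rewrite /pball /= lte_fin => hz.
    have [m0 [m1 m2]] := mid a z e hz.
    rewrite /regul /dbarA; apply: le_lt_trans (_ : ((d a z + e) / 2)%:E < e%:E)%E;
      last by rewrite lte_fin.
    apply: ereal_inf_lbound; exists ((d a z + e) / 2) => //; split => //.
    apply: subset_closure; exists a => //; by rewrite /pball /= lte_fin.
  + move=> z [a Aa hz]; move: hz; rewrite /pball /regul /dbarA.
    move/ereal_inf_lt => [_ [e' [e'0 hcl] <-]]; rewrite lte_fin => lt.
    exact: (closureS (mono a e' e Aa lt)).
- apply: dbarcA_eq => e e0.
  + move=> z [a Aa hz]; exists a => //; move: hz; rewrite /pball /= lte_fin => hz.
    have [m0 [m1 m2]] := mid a z e hz.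
    rewrite /semiregul /dbarcA; apply: le_lt_trans (_ : ((d a z + e) / 2)%:E < e%:E)%E;
      last by rewrite lte_fin.
    apply: ereal_inf_lbound; exists ((d a z + e) / 2) => //; split => //.
    left; exists a => //; by rewrite /pball /= lte_fin.
  + move=> z [a Aa hz]; move: hz; rewrite /pball /semiregul /dbarcA.
    move/ereal_inf_lt => [_ [e' [e'0 hcl] <-]]; rewrite lte_fin => lt.
    case: hcl => [h|h]; first by left; exact: (mono a e' e Aa lt).
    right; apply: (interiorS (closureS (mono a e' e Aa lt))); exact: h.
Qed.
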